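(* Let $k\ge 1$ and $\ell$ be integers with $0\le \ell\le k$. Let $G$ be a multigraph (loops allowed) with $n$ vertices and $kn-\ell$ edges. The following statements are equivalent: (1) $G$ is the union of $\ell$ edge-disjoint spanning trees and $k-\ell$ edge-disjoint maps; (2) adding any $\ell$ edges to $G$ results in a $k$-map.
   Context: Graphs are multigraphs, possibly with loops. A map is a graph admitting an orientation of its edges such that every vertex has out-degree exactly $1$ (a loop contributes out-degree $1$ to its vertex); maps here are spanning, i.e. on the full vertex set of $G$. A $k$-map is a graph whose edge set can be partitioned into $k$ edge-disjoint maps on the same vertex set. *)

(* Defs.v *)
From mathcomp Require Import all_boot.
Set Implicit Arguments. Unset Strict Implicit. Unset Printing Implicit Defensive.

(* A multigraph (loops allowed) on vertex finType V is given by a finType E of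
   edges and an endpoint function ends : E -> V * V (a loop has equal ends).
   A subgraph on the full vertex set is given by a set of edges S. *)
Section Graphs.
Variables (V E : finType) (ends : E -> V * V).

Definition joins (e : E) (u v : V) : bool :=
  (ends e == (u, v)) || (ends e == (v, u)).

(* S (on the full vertex set V) is a map: there is an orientation of its edges
   (a choice of tail among the two endpoints) giving every vertex out-degree 1. *)
Definition is_map (S : {set E}) : Prop :=
  exists tail : E -> V,
    (forall e, e \in S -> (tail e == (ends e).1) || (tail e == (ends e).2)) /\
    (forall v : V, #|[set e in S | tail e == v]| = 1).

Definition is_kmap (k : nat) : Prop :=
  exists f : E -> 'I_k, forall i : 'I_k, is_map [set e | f e == i].

Definition adj (S : {set E}) : rel V :=
  fun u v => [exists e in S, joins e u v].

Definition connected_spanning (S : {set E}) : Prop :=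
  forall u v : V, connect (adj S) u v.

(* a cycle in S: distinct edges s_0..s_{m-1} (m >= 1) and distinct vertices
   vs_0..vs_{m-1} with s_i joining vs_i and vs_{i+1 mod m}
   (m = 1: a loop; m = 2: two parallel edges). *)
Definition has_cycle (S : {set E}) : Prop :=
  exists (s : seq E) (vs : seq V) (e0 : E) (v0 : V),
    [/\ 0 < size s, size vs = size s, uniq s && uniq vs,
        all (fun e => e \in S) s &
        forall i, i < size s ->
          joins (nth e0 s i) (nth v0 vs i) (nth v0 vs ((i.+1) %% size s))].

Definition is_spanning_tree (S : {set E}) : Prop :=
  connected_spanning S /\ ~ has_cycle S.

Definition trees_and_maps (k l : nat) : Prop :=
  exists f : E -> 'I_k, forall i : 'I_k,
    if i < l then is_spanning_tree [set e | f e == i]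
    else is_map [set e | f e == i].

End Graphs.

Definition add_edges (V E : finType) (ends : E -> V * V) (l : nat)
  (add : 'I_l -> V * V) : E + 'I_l -> V * V :=
  fun x => match x with inl e => ends e | inr j => add j end.

(* Main.v *)
Require Import Defs.
From mathcomp Require Import all_boot zify.
Set Implicit Arguments. Unset Strict Implicit. Unset Printing Implicit Defensive.


Lemma card_sumE (T : finType) (P : pred T) : #|[set x | P x]| = \sum_x (P x : nat).
Proof. by rewrite -sum1dep_card big_mkcond /=; apply: eq_bigr => x _; case: (P x). Qed.

Lemma card_sumtype (A B : finType) (P : pred (A + B)) :
  #|[set x | P x]| = #|[set a | P (inl a)]| + #|[set b | P (inr b)]|.
Proof. by rewrite !card_sumE big_sumType. Qed.

Lemma card_split (T W : finType) (g : T -> W) (P : pred T) :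
  #|[set x | P x]| = \sum_(w : W) #|[set x | P x && (g x == w)]|.
Proof.
rewrite card_sumE (partition_big g predT) //=. apply: eq_bigr => w _.
rewrite card_sumE big_mkcond /=. apply: eq_bigr => x _.
by case: (g x == w); rewrite ?andbT ?andbF.
Qed.

Lemma sum_pos (T : finType) (D : pred T) (F : T -> bool) :
  0 < \sum_(a in D) (F a : nat) -> exists a, (a \in D) && F a.
Proof.
move=> H; case: (boolP [exists a, (a \in D) && F a]) => [/existsP//|/existsPn Hn].
move: H; rewrite big1 // => a aD. by move: (Hn a); rewrite aD /= => /negbTE ->.
Qed.

Section Orient.
Variables (V E : finType) (ends : E -> V * V) (tl : E -> V) (r : V).
Hypothesis Htl : forall e, (tl e == (ends e).1) || (tl e == (ends e).2).

Definition hd e := if tl e == (ends e).1 then (ends e).2 else (ends e).1.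

Lemma tl_hd e : (tl e = (ends e).1 /\ hd e = (ends e).2) \/ (tl e = (ends e).2 /\ hd e = (ends e).1).
Proof.
rewrite /hd; case: eqP => [-> | H]; [left | right]; split => //.
by move: (Htl e) => /orP [/eqP|/eqP].
Qed.

Lemma joins_tl e : joins ends e (tl e) (hd e).
Proof.
rewrite /joins; case: (tl_hd e) => [[-> ->]|[-> ->]]; by rewrite -?surjective_pairing eqxx ?orbT.
Qed.

Lemma joins_ends e x y : joins ends e x y -> ((tl e == x) || (tl e == y)) && ((hd e == x) || (hd e == y)).
Proof.
rewrite /joins; case: (tl_hd e) => [[]|[]]; case: (ends e) => p q /= -> -> /orP [] /eqP [-> ->];
  by rewrite !eqxx ?orbT.
Qed.

Lemma adj_sym A : symmetric (adj ends A).
Proof.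
move=> u v; rewrite /adj; apply/existsP/existsP => [] [e He]; exists e; by rewrite /joins orbC.
Qed.

Definition rho (D : {set E}) (X : {set V}) := \sum_(a in D) ((tl a \in X) && (hd a \notin X) : nat).

Lemma rho_sub D X Y : rho D (X :&: Y) + rho D (X :|: Y) <= rho D X + rho D Y.
Proof.
rewrite /rho -!big_split /=; apply: leq_sum => a _; rewrite !inE.
by case: (tl a \in X); case: (tl a \in Y); case: (hd a \in X); case: (hd a \in Y).
Qed.

Definition arb (A : {set E}) :=
  [/\ forall v, v != r -> #|[set a in A | tl a == v]| = 1,
      forall a, a \in A -> tl a != r &
      exists h : V -> nat, forall a, a \in A -> h (hd a) < h (tl a)].

Lemma arb_conn A : arb A -> forall v, connect (adj ends A) v r.
Proof.
case=> Hdeg Htr [h Hh] v.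
move: {2}(h v).+1 (ltnSn (h v)) => n; elim: n v => [//|n IH] v Hv.
case: (eqVneq v r) => [-> | Hvr]; first exact: connect0.
have: 0 < #|[set a in A | tl a == v]| by rewrite Hdeg.
case/card_gt0P => a; rewrite inE => /andP [aA /eqP tav].
apply: (@connect_trans _ _ (hd a)).
  apply: connect1; apply/existsP; exists a; rewrite aA /= -tav; exact: joins_tl.
apply: IH. have := Hh a aA. rewrite tav. lia.
Qed.

Lemma arb_tree A : arb A -> is_spanning_tree ends A.
Proof.
move=> HA; split.
  move=> u v. apply: (@connect_trans _ _ r); first exact: arb_conn.
  rewrite (sym_connect_sym (@adj_sym A)); exact: arb_conn.
case: HA => Hdeg Htr [h Hh] [s [vs [e0 [v0 [Hs Hvs /andP[Us Uvs] HA Hj]]]]].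
have Hin: forall a, a \in s -> (tl a \in vs) && (hd a \in vs).
  move=> a /(nthP e0) [i Hi <-]. have := joins_ends (Hj i Hi).
  have m1: nth v0 vs i \in vs by apply: mem_nth; rewrite Hvs.
  have m2: nth v0 vs (i.+1 %% size s) \in vs by apply: mem_nth; rewrite Hvs ltn_pmod.
  by case/andP => /orP [] /eqP -> /orP [] /eqP ->; rewrite ?m1 ?m2.
have inj: {in s &, injective tl}.
  move=> a b ais bis tab. have aA := allP HA a ais; have bA := allP HA b bis.
  have := Hdeg (tl a) (Htr a aA). move/eqP; rewrite eqn_leq => /andP [/card_le1_eqP H _].
  have ha : a \in [set c in A | tl c == tl a] by rewrite inE aA eqxx.
  have hb : b \in [set c in A | tl c == tl a] by rewrite inE bA tab eqxx.
  by rewrite (H _ _ ha hb).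
have Utl : uniq (map tl s) by rewrite map_inj_in_uniq.
have sub1 : {subset map tl s <= vs}.
  by move=> x /mapP [a ais ->]; case/andP: (Hin a ais).
have Hsz : size vs <= size (map tl s) by rewrite size_map Hvs.
have [_ eqs] := uniq_min_size Utl sub1 Hsz.
have v0in : nth v0 vs 0 \in vs by apply: mem_nth; rewrite Hvs.
case: (@arg_minnP V (nth v0 vs 0) (fun u => u \in vs) h v0in) => u uvs Hmin.
have := uvs. rewrite -(eqs u). move=> /mapP [a ais Hu]. rewrite Hu in Hmin.
have := Hh a (allP HA a ais). case/andP: (Hin a ais) => _ hv. have := Hmin _ hv. lia.
Qed.
End Orient.


Lemma ar4 a b c d e : e <= b -> a + b <= c + d -> c <= e -> d <= e -> a <= e.
Proof. lia. Qed.

Section Grow.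
Variables (V E : finType) (ends : E -> V * V) (tl : E -> V) (r : V).
Hypothesis Htl : forall e, (tl e == (ends e).1) || (tl e == (ends e).2).
Variables (Avail : {set E}) (ell : nat).
Hypothesis Hglob : forall X : {set V}, r \notin X -> X != set0 -> ell < rho ends tl Avail X.

Local Notation hd := (hd ends tl).
Local Notation rho := (rho ends tl).

Definition ginv (R : {set V}) (A : {set E}) (h : V -> nat) :=
 [/\ r \in R, A \subset Avail,
     (forall a, a \in A -> [&& tl a \in R, tl a != r, hd a \in R & h (hd a) < h (tl a)]),
     (forall v, v \in R -> v != r -> #|[set a in A | tl a == v]| = 1) /\ (forall v, v \in R -> h v < #|R|)
   & forall X : {set V}, r \notin X -> X != set0 -> ell <= rho (Avail :\: A) X].

Definition dangerous (A : {set E}) (R : {set V}) (Z : {set V}) :=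
  [&& r \notin Z, Z :\: R != set0 & rho (Avail :\: A) Z <= ell].

Lemma choose_arc R A h : ginv R A h -> R != setT ->
  exists a, [/\ a \in Avail :\: A, tl a \notin R, hd a \in R &
     forall X : {set V}, r \notin X -> X != set0 -> tl a \in X -> hd a \notin X ->
        ell < rho (Avail :\: A) X].
Proof.
case=> rR AS HA [Hdeg Hb] Hrho RT.
have AR : forall a, a \in A -> tl a \in R by move=> a /HA /and4P [].
case: (pickP (dangerous A R)) => [Z0 HZ0 | Hnone].
  case: (@arg_minnP _ Z0 (dangerous A R) (fun Z => #|Z|) HZ0) => Z HZ Zmin.
  case/and3P: (HZ) => rZ ZR rhoZ.
  have: [exists b in Avail :\: A, (tl b \in Z :\: R) && (hd b \in Z :&: R)].
    apply: contraT => /existsPn Hno.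
    have rZR : r \notin Z :\: R by rewrite inE negb_and rZ orbT.
    have := Hglob rZR ZR.
    suff : rho Avail (Z :\: R) <= rho (Avail :\: A) Z by lia.
    rewrite /rho (big_setID A) /= big1; last first.
      move=> a; rewrite inE => /andP [_ aA]; by rewrite !inE (AR a aA).
    rewrite add0n; apply: leq_sum => a aD.
    move: (Hno a); rewrite aD /= !inE.
    by case: (tl a \in Z); case: (tl a \in R); case: (hd a \in Z); case: (hd a \in R).
  case/existsP => b /andP [bA /andP [tb hb]]. exists b.
  move: tb hb => /setDP [tbZ tbR] /setIP [hbZ hbR].
  split => // X rX X0 tX hX. rewrite ltnNge; apply/negP => HX.
  have rXZ : r \notin X :|: Z by rewrite inE negb_or rX rZ.
  have XZ0 : X :|: Z != set0.
    apply/set0Pn; exists (tl b); by rewrite inE tX.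
  have H1 := Hrho _ rXZ XZ0. have H2 := rho_sub ends tl (Avail :\: A) X Z.
  have dI : dangerous A R (X :&: Z).
    rewrite /dangerous inE negb_and rX /=.
    apply/andP; split; last exact: (ar4 H1 H2 HX rhoZ).
    apply/set0Pn; exists (tl b); by rewrite !inE tbR tX tbZ.
  have := Zmin _ dI => HZc.
  have : X :&: Z == Z by rewrite eqEcard subsetIr HZc.
  move/eqP/setP => /(_ (hd b)); rewrite !inE hbZ (negbTE hX) //.
have HRc : ~: R != set0.
  apply: contra RT => /eqP H; apply/eqP/setP => x; move/setP: H => /(_ x).
  by rewrite !inE; case: (x \in R).
have rRc : r \notin ~: R by rewrite inE rR.
have := Hglob rRc HRc => /(leq_ltn_trans (leq0n _)) /sum_pos [b /andP [bA]].
rewrite !inE negbK => /andP [tbR hbR].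
have bnA : b \notin A by apply: contra tbR => /AR.
exists b; split => //; first by rewrite inE bnA.
move=> X rX X0 tX hX. move: (Hnone X); rewrite /dangerous rX /= => /negbT.
rewrite negb_and -ltnNge => /orP [|//].
rewrite negbK => /eqP /setP /(_ (tl b)); by rewrite !inE tbR tX.
Qed.

Lemma rho_del (D : {set E}) (a : E) (X : {set V}) : a \in D ->
  rho D X = ((tl a \in X) && (hd a \notin X)) + rho (D :\ a) X.
Proof.
move=> aD; rewrite /rho (bigD1 a aD) /=; congr (_ + _).
by apply: eq_bigl => c; rewrite !inE andbC.
Qed.

Lemma extend R A h a : ginv R A h -> a \in Avail :\: A -> tl a \notin R -> hd a \in R ->
  (forall X : {set V}, r \notin X -> X != set0 -> tl a \in X -> hd a \notin X ->
        ell < rho (Avail :\: A) X) ->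
  ginv (tl a |: R) (a |: A) (fun v => if v == tl a then #|R| else h v).
Proof.
case=> rR AS HA [Hdeg Hb] Hrho aD taR haR Hgood.
have AR : forall b, b \in A -> tl b \in R by move=> b /HA /and4P [].
have hneq : hd a != tl a by apply: (contraNneq _ taR) => <-.
move: (aD) => /setDP [aAv anA].
split.
- by rewrite inE rR orbT.
- by rewrite subUset sub1set aAv AS.
- move=> b; rewrite !inE => /orP [/eqP -> | bA].
    rewrite (negbTE hneq) eqxx haR orbT /=.
    apply/andP; split; last exact: Hb.
    by apply: (contraNneq _ taR) => ->.
  case/and4P: (HA b bA) => tbR tbr hbR hlt.
  rewrite tbR hbR !orbT tbr /=.
  have -> : (hd b == tl a) = false by apply/negbTE; apply: (contraNneq _ taR) => <-.
  have -> : (tl b == tl a) = false by apply/negbTE; apply: (contraNneq _ taR) => <-.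
  exact: hlt.
- split.
    move=> v; rewrite !inE => /orP [/eqP -> | vR] vr.
      rewrite -(cards1 a); apply: eq_card => b; rewrite !inE.
      case: (eqVneq b a) => [-> | ba]; first by rewrite eqxx.
      rewrite /=; apply/negbTE; apply/andP => [[bA /eqP tb]].
      by move: (AR b bA); rewrite tb (negbTE taR).
    rewrite -(Hdeg v vR vr); apply: eq_card => b; rewrite !inE.
    case: (eqVneq b a) => [-> | ba] //=.
    rewrite (negbTE anA) /=; apply/negbTE; by apply: (contraNneq _ taR) => ->.
  move=> v; rewrite !inE cardsU1 taR add1n ltnS => /orP [/eqP -> | vR].
    by rewrite eqxx.
  case: eqP => [_ | _]; [done | exact: ltnW (Hb v vR)].
- move=> X rX X0; have := Hrho X rX X0; rewrite (rho_del X aD).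
  have -> : (Avail :\: A) :\ a = Avail :\: (a |: A).
    by apply/setP => b; rewrite !inE; case: (b == a); rewrite ?andbF.
  case: (boolP ((tl a \in X) && (hd a \notin X))) => [/andP [tX hX] | _] /=; last by rewrite add0n.
  have := Hgood X rX X0 tX hX; rewrite (rho_del X aD).
  have -> : (Avail :\: A) :\ a = Avail :\: (a |: A).
    by apply/setP => b; rewrite !inE; case: (b == a); rewrite ?andbF.
  by rewrite tX hX add1n ltnS.
Qed.

Lemma grow_aux n : forall (R : {set V}) (A : {set E}) (h : V -> nat), #|V| - #|R| <= n -> ginv R A h ->
  exists A' h', ginv setT A' h'.
Proof.
elim: n => [|n IH] R A h Hn HI.
  have HR : R = setT.
    apply/eqP; rewrite eqEcard subsetT cardsT. move: Hn; rewrite leqn0 subn_eq0 //.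
  rewrite HR in HI; by exists A, h.
case: (eqVneq R setT) => [HR | RT]; first by rewrite HR in HI; exists A, h.
have [a [aD taR haR Hgood]] := choose_arc HI RT.
have HI' := extend HI aD taR haR Hgood.
apply: (IH _ _ _ _ HI').
rewrite cardsU1 taR add1n.
have : #|R| < #|V|.
  have H1 : #|R| <= #|V| by exact: max_card.
  rewrite ltn_neqAle H1 andbT.
  apply/negP => /eqP HR.
  have : R == setT by rewrite eqEcard subsetT cardsT HR leqnn.
  by rewrite (negbTE RT).
move: Hn; clear. lia.
Qed.

End Grow.


Section Branch.
Variables (V E : finType) (ends : E -> V * V) (tl : E -> V) (r : V).

Lemma branching ell : forall Avail : {set E},
  (forall X : {set V}, r \notin X -> X != set0 -> ell <= rho ends tl Avail X) ->
  exists c : E -> nat, forall i, i < ell -> arb ends tl r [set a in Avail | c a == i].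
Proof.
elim: ell => [|ell IH] Avail Hglob; first by exists (fun _ => 0).
have HI : ginv ends tl r Avail ell [set r] set0 (fun _ => 0).
  split.
  - by rewrite inE.
  - exact: sub0set.
  - by move=> a; rewrite in_set0.
  - split; first by move=> v; rewrite inE => /eqP ->; rewrite eqxx.
    by move=> v _; rewrite cards1.
  - by move=> X rX X0; rewrite setD0; apply: ltnW; apply: Hglob.
have [A [h [_ AS HA [Hdeg _] Hrho]]] := grow_aux Hglob (leqnn _) HI.
have [c' Hc'] := IH _ Hrho.
exists (fun a => if a \in A then 0 else (c' a).+1).
move=> i; case: i => [|i] Hi.
  have -> : [set a in Avail | (if a \in A then 0 else (c' a).+1) == 0] = A.
    apply/setP => a; rewrite !inE; case: (boolP (a \in A)) => aA; last by rewrite andbF.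
    by rewrite (subsetP AS a aA).
  split.
  - by move=> v vr; apply: Hdeg; rewrite ?inE.
  - by move=> a /HA /and4P [].
  - by exists h => a /HA /and4P [].
have -> : [set a in Avail | (if a \in A then 0 else (c' a).+1) == i.+1] =
          [set a in Avail :\: A | c' a == i].
  apply/setP => a; rewrite !inE; case: (a \in A) => /=; [by rewrite andbF | by rewrite eqSS].
exact: Hc'.
Qed.
End Branch.


Lemma sum_eq_pointwise (T : finType) (x y : T -> nat) :
  (forall u, y u <= x u) -> \sum_u x u <= \sum_u y u -> forall u, x u = y u.
Proof.
move=> H Hs u; apply/eqP; rewrite eqn_leq H andbT.
move: Hs; rewrite (bigD1 u) //= [X in _ <= X](bigD1 u) //=.
have : \sum_(i | i != u) y i <= \sum_(i | i != u) x i by apply: leq_sum => i _; apply: H.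
move: (\sum_(i | i != u) y i) (\sum_(i | i != u) x i) => a b. lia.
Qed.

Lemma sum_ltn (l k : nat) : \sum_(i < k) (i < l : nat) = minn l k.
Proof.
elim: k => [|k IH]; first by rewrite big_ord0 minn0.
rewrite big_ord_recr /= IH. lia.
Qed.

Lemma sum_eqi (l x : nat) : \sum_(i < l) (x == i : nat) = (x < l).
Proof.
elim: l => [|l IH]; first by rewrite big_ord0.
rewrite big_ord_recr /= (eq_bigr (fun i : 'I_l => (x == i : nat))) // IH.
case: ltngtP; lia.
Qed.

Lemma joins_two (V E : finType) (ends : E -> V * V) e v w v' w' :
  joins ends e v w -> joins ends e v' w' -> v != v' -> v' = w /\ v = w'.
Proof.
rewrite /joins; case: (ends e) => p q.
by case/orP => /eqP [-> ->] /orP [] /eqP [-> ->]; rewrite ?eqxx.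
Qed.

Lemma joins_end (V E : finType) (ends : E -> V * V) e v w :
  joins ends e v w -> (v == (ends e).1) || (v == (ends e).2).
Proof. rewrite /joins; case: (ends e) => p q; by case/orP => /eqP [-> ->]; rewrite eqxx ?orbT. Qed.

Section Tree.
Variables (V E : finType) (ends : E -> V * V) (S : {set E}) (a : V).
Hypothesis Hc : connected_spanning ends S.

Definition Pd (v : V) (n : nat) :=
  [exists p : n.-tuple V, path (adj ends S) v p && (last v p == a)].

Lemma Hex v : exists n, Pd v n.
Proof.
have /connectP [p Hp Hl] := Hc v a.
exists (size p); apply/existsP; exists (in_tuple p); by rewrite /= Hp -Hl eqxx.
Qed.

Definition d v := ex_minn (Hex v).

Lemma d_step v : v != a -> exists e w, [/\ e \in S, joins ends e v w & d w < d v].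
Proof.
move=> va; rewrite /d; case: (ex_minnP (Hex v)) => m /existsP [p /andP [Hp Hl]] _.
move: Hp Hl; case: p => [[|w q] /= Hsz]; first by move=> _ /eqP Hva; rewrite Hva eqxx in va.
case/andP => /existsP [e /andP [eS Hj]] Hq Hl.
exists e, w; split => //.
case: (ex_minnP (Hex w)) => m' _ Hmin.
have : Pd w (size q) by apply/existsP; exists (in_tuple q); rewrite /= Hq Hl.
move/Hmin; rewrite -(eqP Hsz) /=; lia.
Qed.

Definition Q v e := [&& v != a, e \in S & [exists w, joins ends e v w && (d w < d v)]].

Lemma Q_uniq v v' e : Q v e -> Q v' e -> v = v'.
Proof.
case/and3P => _ _ /existsP [w /andP [Hw dw]].
case/and3P => _ _ /existsP [w' /andP [Hw' dw']].
apply/eqP; apply: contraT => Hne.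
have [E1 E2] := joins_two Hw Hw' Hne. subst. lia.
Qed.

Definition tt e := odflt a [pick v | Q v e].

Lemma tt_Q v e : Q v e -> tt e = v.
Proof.
move=> Hq; rewrite /tt; case: pickP => [v' Hv' | H] /=; first exact: Q_uniq Hv' Hq.
by move: (H v); rewrite Hq.
Qed.

Definition W := [set e | [exists v, Q v e]].

Lemma tree_count : #|V| <= #|S| + 1 /\
  (#|S| + 1 <= #|V| -> exists t : E -> V,
     (forall e, e \in S -> (t e == (ends e).1) || (t e == (ends e).2)) /\
     forall u, #|[set e in S | t e == u]| = (u != a)).
Proof.
pose x u := #|[set e | (e \in W) && (tt e == u)]|.
pose y u := (u != a : nat).
have HW : #|W| = \sum_u x u by rewrite -(card_split tt (fun e => e \in W)); apply: eq_card => e; rewrite inE.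
have Hy : \sum_u y u + 1 = #|V|.
  rewrite /y -card_sumE.
  have -> : [set u | u != a] = [set~ a] by apply/setP => u; rewrite !inE.
  rewrite cardsC1. have : 0 < #|V| by apply/card_gt0P; exists a.
  lia.
have Hxy : forall u, y u <= x u.
  move=> u; rewrite /y /x; case: (eqVneq u a) => [-> | ua] //.
  have [e [w [eS Hj Hd]]] := d_step ua.
  have Hq : Q u e by rewrite /Q ua eS /=; apply/existsP; exists w; rewrite Hj Hd.
  apply/card_gt0P; exists e; rewrite !inE (tt_Q Hq) eqxx andbT.
  by apply/existsP; exists u.
have WS : W \subset S by apply/subsetP => e; rewrite inE => /existsP [v /and3P [_ ? _]].
have HWS := subset_leq_card WS.
have Hsum : \sum_u y u <= \sum_u x u by apply: leq_sum => u _; apply: Hxy.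
split; first lia.
move=> HS.
have Hxy' := @sum_eq_pointwise _ x y Hxy (ltac:(lia)).
have WeqS : W = S by apply/eqP; rewrite eqEcard WS /=; lia.
exists tt; split.
  move=> e; rewrite -WeqS inE => /existsP [v Hq]; rewrite (tt_Q Hq).
  case/and3P: Hq => _ _ /existsP [w /andP [Hj _]].
  exact: joins_end Hj.
move=> u; rewrite -/(y u) -Hxy' /x -WeqS; apply: eq_card => e; by rewrite !inE.
Qed.
End Tree.


Lemma kmap_orient (V F : finType) (ends : F -> V * V) k : is_kmap ends k ->
  exists t : F -> V, (forall x, (t x == (ends x).1) || (t x == (ends x).2)) /\
                     forall v, #|[set x | t x == v]| = k.
Proof.
case=> f Hf. have [T HT] := fin_all_exists Hf.
exists (fun x => T (f x) x); split.
  move=> x; case: (HT (f x)) => H1 _; apply: H1; by rewrite inE.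
move=> v; rewrite (card_split f).
rewrite (eq_bigr (fun _ => 1)); first by rewrite sum_nat_const card_ord muln1.
move=> i _; case: (HT i) => _ H2; rewrite -(H2 v); apply: eq_card => x; rewrite !inE.
by case: (eqVneq (f x) i) => [-> | _]; rewrite ?andbF ?andbT.
Qed.

Lemma dir12 (k l : nat) (V E : finType) (ends : E -> V * V) :
  1 <= k -> l <= k -> #|E| + l = k * #|V| ->
  trees_and_maps ends k l -> forall add : 'I_l -> V * V, is_kmap (add_edges ends add) k.
Proof.
move=> Hk Hlk HE [f Hf] add.
pose sz (i : 'I_k) := #|[set e | f e == i]|.
pose y (i : 'I_k) := if i < l then #|V|.-1 else #|V|.
have Hsz : forall i : 'I_k, y i <= sz i.
  move=> i; rewrite /y /sz; have := Hf i; case: ifP => Hil.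
  - case=> Hc _. have [H _] := tree_count (add (Ordinal Hil)).1 Hc. lia.
  - case=> t [_ Ht]. rewrite (card_split t) (eq_bigr (fun _ => 1)).
      by rewrite sum_nat_const muln1.
    move=> v _; rewrite -(Ht v); apply: eq_card => e; by rewrite !inE.
have Hsum : \sum_i sz i = #|E|.
  have := card_split f (fun _ => true).
  have -> : #|[set x : E | true]| = #|E| by apply: eq_card => x; rewrite inE.
  move=> ->; apply: eq_bigr => i _; apply: eq_card => x; by rewrite !inE.
have Hvert : l = 0 \/ 0 < #|V|.
  case: (posnP l) => [Hl0|Hlp]; [by left | right].
  by apply/card_gt0P; exists (add (Ordinal Hlp)).1.
have Hysum : \sum_i y i + l = k * #|V|.
  have -> : l = \sum_(i < k) (i < l : nat) by rewrite sum_ltn; lia.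
  rewrite -big_split /= (eq_bigr (fun _ => #|V|)) ?sum_nat_const ?card_ord //.
  move=> i _; rewrite /y; case Hi: (i < l) => /=; last by rewrite addn0.
  case: Hvert => Hv; [by move: Hi; rewrite Hv | by rewrite addn1 prednK].
have Hle : \sum_i sz i <= \sum_i y i.
  move: Hsum Hysum HE; move: (\sum_i sz i) (\sum_i y i) => a b; lia.
have Heq := sum_eq_pointwise Hsz Hle.
pose f' (x : E + 'I_l) : 'I_k := match x with inl e => f e | inr j => widen_ord Hlk j end.
exists f' => i.
case: (ltnP i l) => Hil.
- have := Hf i; rewrite Hil => -[Hc _].
  pose j0 := Ordinal Hil. pose a := (add j0).1.
  have Hn : 0 < #|V| by apply/card_gt0P; exists a.
  have [_ H] := tree_count a Hc.
  have Hs : #|[set e | f e == i]| + 1 <= #|V|.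
    have := Heq i; rewrite /sz /y Hil => ->; lia.
  have [t [Ht1 Ht2]] := H Hs.
  exists (fun x => match x with inl e => t e | inr j => (add j).1 end). split.
    case=> [e|j]; rewrite inE /= => Hx; last by rewrite eqxx.
    by apply: Ht1; rewrite inE.
  move=> u.
  have -> : #|[set x in [set x | f' x == i] | (match x with inl e => t e | inr j => (add j).1 end) == u]|
     = #|[set x | (f' x == i) && ((match x with inl e => t e | inr j => (add j).1 end) == u)]|.
    by apply: eq_card => x; rewrite !inE.
  rewrite card_sumtype /=.
  have -> : #|[set e | (f e == i) && (t e == u)]| = (u != a).
    rewrite -(Ht2 u); apply: eq_card => e; by rewrite !inE.
  have Hj : forall j : 'I_l, (widen_ord Hlk j == i) = (j == j0).
    by move=> j; rewrite -!val_eqE.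
  have -> : #|[set j | (widen_ord Hlk j == i) && ((add j).1 == u)]| = (a == u).
    case: (eqVneq a u) => [<- | au].
      apply: (@eq_trans _ _ #|[set j0]|); last by rewrite cards1.
      apply: eq_card => j; rewrite !inE Hj.
      by case: (eqVneq j j0) => [-> | _] //=; rewrite /a eqxx.
    apply: (@eq_trans _ _ 0); last done.
    apply/eqP; rewrite cards_eq0; apply/eqP/setP => j; rewrite !inE Hj.
    by case: (eqVneq j j0) => [-> | ] //=; rewrite (negbTE au).
  by rewrite eq_sym; case: eqP.
- have := Hf i; rewrite ltnNge Hil /= => -[t [Ht1 Ht2]].
  exists (fun x => match x with inl e => t e | inr j => (add j).1 end). split.
    case=> [e|j]; rewrite inE /= => Hx; last by rewrite eqxx.
    by apply: Ht1; rewrite inE.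
  move=> u.
  have -> : #|[set x in [set x | f' x == i] | (match x with inl e => t e | inr j => (add j).1 end) == u]|
     = #|[set x | (f' x == i) && ((match x with inl e => t e | inr j => (add j).1 end) == u)]|.
    by apply: eq_card => x; rewrite !inE.
  rewrite card_sumtype /=.
  have -> : #|[set j | (widen_ord Hlk j == i) && ((add j).1 == u)]| = 0.
    apply/eqP; rewrite cards_eq0; apply/eqP/setP => j; rewrite !inE.
    case: (eqVneq (widen_ord Hlk j) i) => [Hw|] //=.
    by move: (ltn_ord j) Hil; rewrite -Hw /=; lia.
  rewrite addn0 -(Ht2 u); apply: eq_card => e; by rewrite !inE.
Qed.

Lemma out_in (T W : finType) (t : T -> W) k (X : {set W}) :
  (forall v, v \in X -> #|[set x | t x == v]| = k) -> #|[set x | t x \in X]| = #|X| * k.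
Proof.
move=> H; rewrite (card_split t) (bigID (fun v => v \in X)) /= [X in _ + X]big1 ?addn0.
  rewrite -sum_nat_const; apply: eq_bigr => v vX; rewrite -(H v vX); apply: eq_card => x.
  by rewrite !inE; case: eqP => [->|]; rewrite ?vX ?andbF.
move=> v vX; apply/eqP; rewrite cards_eq0; apply/eqP/setP => x; rewrite !inE.
by case: eqP => [->|]; rewrite ?(negbTE vX) ?andbF.
Qed.

Lemma dir21 (k l : nat) (V E : finType) (ends : E -> V * V) :
  1 <= k -> l <= k -> #|E| + l = k * #|V| ->
  (forall add : 'I_l -> V * V, is_kmap (add_edges ends add) k) -> trees_and_maps ends k l.
Proof.
move=> Hk Hlk HE H2.
pose i0 : 'I_k := Ordinal Hk.
case: (pickP (fun _ : V => true)) => [r _ | Hnone]; last first.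
  have HV : #|V| = 0 by apply: eq_card0 => v; have := Hnone v.
  have HE0 : #|E| = 0 by move: HE; rewrite HV muln0; lia.
  have Hl0 : l = 0 by move: HE; rewrite HV muln0; lia.
  have tl0 : E -> V by move=> e; exfalso; have := card0_eq HE0 e.
  exists (fun _ => i0) => i; rewrite Hl0 ltn0.
  exists tl0; split; first by move=> e; exfalso; have := card0_eq HE0 e.
  by move=> v; exfalso; have := Hnone v.
have [t0 [Ht0a Ht0b]] := kmap_orient (H2 (fun _ => (r, r))).
pose tl e := t0 (inl e).
have Htl : forall e, (tl e == (ends e).1) || (tl e == (ends e).2) := fun e => Ht0a (inl e).
have t0r : forall j, t0 (inr j) = r by move=> j; have := Ht0a (inr j); rewrite /= orbb => /eqP.
have Hdeg : forall v, #|[set e | tl e == v]| + (if v == r then l else 0) = k.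
  move=> v; rewrite -(Ht0b v) card_sumtype; congr (_ + _).
  case: (eqVneq v r) => [-> | vr].
    rewrite -[in LHS](card_ord l); apply: eq_card => j; by rewrite !inE t0r eqxx.
  apply/esym/eqP; rewrite cards_eq0; apply/eqP/setP => j; rewrite !inE t0r eq_sym.
  exact: negbTE.
have Hrho : forall X : {set V}, r \notin X -> X != set0 -> l <= rho ends tl [set: E] X.
  move=> X rX /set0Pn [x0 x0X].
  have [t1 [Ht1a Ht1b]] := kmap_orient (H2 (fun _ => (x0, x0))).
  pose Ein := [set e | ((ends e).1 \in X) && ((ends e).2 \in X)].
  have HA : #|[set x | t1 x \in X]| = #|X| * k by apply: out_in => v _; apply: Ht1b.
  have HB : #|[set x | t1 x \in X]| = #|[set e | t1 (inl e) \in X]| + l.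
    rewrite card_sumtype; congr (_ + _).
    rewrite -[in RHS](card_ord l); apply: eq_card => j; rewrite !inE.
    have := Ht1a (inr j); by rewrite /= orbb => /eqP ->.
  have HC : #|Ein| <= #|[set e | t1 (inl e) \in X]|.
    apply: subset_leq_card; apply/subsetP => e; rewrite !inE => /andP [h1 h2].
    by case/orP: (Ht1a (inl e)) => /eqP ->.
  have HD : #|[set e | tl e \in X]| = #|X| * k.
    apply: out_in => v vX; have := Hdeg v.
    have -> : (v == r) = false by apply/negbTE; apply: contraNneq rX => <-.
    by rewrite addn0.
  have HEE : #|[set e | tl e \in X]| <= #|Ein| + rho ends tl [set: E] X.
    have -> : rho ends tl [set: E] X = \sum_e ((tl e \in X) && (hd ends tl e \notin X) : nat).
      by rewrite /rho; apply: eq_bigl => e; rewrite in_setT.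
    rewrite !card_sumE -big_split /=; apply: leq_sum => e _.
    case: (tl_hd Htl e) => [[-> ->]|[-> ->]];
      by case: ((ends e).1 \in X); case: ((ends e).2 \in X).
  move: HA HB HC HD HEE; move: (#|[set x | t1 x \in X]|) (#|[set e | t1 (inl e) \in X]|)
    (#|Ein|) (#|[set e | tl e \in X]|) (rho ends tl [set: E] X) (#|X| * k) => a b c d e f; lia.
have [c Hc] := branching Hrho.
have Hcnt : forall v, #|[set e | (tl e == v) && (c e < l)]| = if v == r then 0 else l.
  move=> v; rewrite card_sumE.
  have -> : \sum_e ((tl e == v) && (c e < l) : nat) = \sum_(i < l) \sum_e ((tl e == v) && (c e == i) : nat).
    rewrite exchange_big /=; apply: eq_bigr => e _.
    by case: (tl e == v) => /=; [rewrite sum_eqi | rewrite big1].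
  rewrite (eq_bigr (fun _ => if v == r then 0 else 1)).
    by case: (v == r); [rewrite big1 | rewrite sum1_card card_ord].
  move=> i _; have [Hd Hr _] := Hc i (ltn_ord i).
  rewrite -card_sumE.
  case: (eqVneq v r) => [-> | vr].
    apply/eqP; rewrite cards_eq0; apply/eqP/setP => e; rewrite !inE.
    case: (eqVneq (c e) i) => [Hce|]; last by rewrite andbF.
    have := Hr e; rewrite !inE Hce eqxx => /(_ isT) /negbTE ->; done.
  rewrite -(Hd v vr); apply: eq_card => e; rewrite !inE; by rewrite andbC.
have Hrem : forall v, #|[set e | (tl e == v) && (l <= c e)]| = k - l.
  move=> v; have := Hdeg v; have := Hcnt v.
  have -> : #|[set e | tl e == v]| = #|[set e | (tl e == v) && (c e < l)]| + #|[set e | (tl e == v) && (l <= c e)]|.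
    rewrite !card_sumE -big_split /=; apply: eq_bigr => e _.
    by rewrite [l <= c e]leqNgt; case: (tl e == v); case: (c e < l).
  case: (v == r); lia.
pose S v := enum [set e | (tl e == v) && (l <= c e)].
have HS : forall v, size (S v) = k - l by move=> v; rewrite /S -cardE Hrem.
pose idx e := index e (S (tl e)).
pose f e := insubd i0 (if c e < l then c e else l + idx e).
have inS : forall e, l <= c e -> e \in S (tl e) by move=> e He; rewrite /S mem_enum inE eqxx He.
have Hfv : forall e, val (f e) = if c e < l then c e else l + idx e.
  move=> e; rewrite val_insubd.
  have -> : (if c e < l then c e else l + idx e) < k; last done.
  case: (ltnP (c e) l) => Hce; first lia.
  have := inS e Hce; rewrite -index_mem -/(idx e) HS; lia.
exists f => i; case: ifP => Hil.
  have -> : [set e | f e == i] = [set a in [set: E] | c a == i].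
    apply/setP => e; rewrite !inE -val_eqE Hfv; case: (ltnP (c e) l) => Hce //.
    have h1 : (l + idx e == i) = false by apply/eqP; lia.
    have h2 : (c e == i) = false by apply/eqP; lia.
    by rewrite h1 h2.
  exact: (@arb_tree _ _ _ _ r Htl _ (Hc i Hil)).
exists tl; split; first by move=> e _; exact: Htl e.
move=> v.
have {Hil} Hil : l <= i by rewrite leqNgt Hil.
have Hi : i - l < size (S v) by rewrite HS; move: (ltn_ord i) Hil; lia.
have : 0 < size (S v) by lia.
case: (S v) => [//|e0 _] _.
rewrite -(cards1 (nth e0 (S v) (i - l))); apply: eq_card => e; rewrite !inE.
apply/andP/eqP => [[/eqP Hf /eqP Htv] | ->].
  have := congr1 (@nat_of_ord k) Hf; rewrite Hfv; case: (ltnP (c e) l) => Hce Hv; first by move: Hil; lia.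
  have eS := inS e Hce; rewrite Htv in eS.
  rewrite -(nth_index e0 eS); congr nth.
  move: Hv; rewrite /idx Htv; lia.
have xS : nth e0 (S v) (i - l) \in S v by apply: mem_nth.
have := xS; rewrite /S mem_enum inE => /andP [/eqP Htx Hcx].
split; last by rewrite Htx.
apply/eqP/val_inj; rewrite Hfv ltnNge Hcx /= /idx Htx index_uniq ?enum_uniq //.
move: (ltn_ord i) Hil; lia.
Qed.


Theorem corollary1 (k l : nat) (V E : finType) (ends : E -> V * V) :
  1 <= k -> l <= k ->
  #|E| + l = k * #|V| ->
  (trees_and_maps ends k l <->
   forall add : 'I_l -> V * V, is_kmap (add_edges ends add) k).
Proof.
move=> Hk Hlk HE; split; [exact: dir12 | exact: dir21].
Qed.
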